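(* Let $U$ be an infinite complex matrix (rows and columns indexed by positive integers) with finitely many nonzero entries in every row and every column, and suppose $U^*U=I$. Then the rows of $U$ are pairwise orthogonal if and only if every row of $U$ has norm $0$ or $1$.
   Context: $U^*$ denotes the Hermitian conjugate of $U$; $I$ is the infinite identity matrix; for rows $r_i,r_k$, $\langle r_k|r_i\rangle=\sum_j u_{kj}^*u_{ij}$ and $\|r_i\|^2=\langle r_i|r_i\rangle$. *)

(* Defs.v *)
From HB Require Import structures.
From mathcomp Require Import all_boot all_order all_algebra.
From mathcomp Require Import complex.
From mathcomp Require Import reals.
Set Implicit Arguments. Unset Strict Implicit. Unset Printing Implicit Defensive.
Import Order.TTheory GRing.Theory Num.Theory.
Local Open Scope ring_scope.

(* Infinite matrices indexed by nat (index 0 plays the role of 1). *)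
Definition infmx (C : Type) := nat -> nat -> C.

Section InfMx.
Variable C : numClosedFieldType.

Definition fin_supp (f : nat -> C) : Prop :=
  exists N : nat, forall k, (N <= k)%N -> f k = 0.

Definition has_fsum (f : nat -> C) (s : C) : Prop :=
  exists N : nat, (forall k, (N <= k)%N -> f k = 0) /\ s = \sum_(k < N) f k.

Definition row_col_finite (U : infmx C) : Prop :=
  (forall i, fin_supp (fun j => U i j)) /\ (forall j, fin_supp (fun i => U i j)).

Definition adjoint_mul_id (U : infmx C) : Prop :=
  forall i j, has_fsum (fun k => (U k i)^* * U k j) (if i == j then 1 else 0).

Definition row_inner_is (U : infmx C) (k i : nat) (s : C) : Prop :=
  has_fsum (fun j => (U k j)^* * U i j) s.

Definition rows_orthogonal (U : infmx C) : Prop :=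
  forall i k, i <> k -> row_inner_is U k i 0.

(* ||r_i||^2 = <r_i|r_i> is 0 or 1 (equivalently ||r_i|| is 0 or 1) *)
Definition rows_norm01 (U : infmx C) : Prop :=
  forall i, row_inner_is U i i 0 \/ row_inner_is U i i 1.

End InfMx.

(* Main.v *)
Require Import Defs.
From HB Require Import structures.
From mathcomp Require Import all_boot all_order all_algebra.
From mathcomp Require Import complex.
From mathcomp Require Import reals.
From mathcomp Require Import ring.
Import Order.TTheory GRing.Theory Num.Theory.
Local Open Scope ring_scope.
Section G.
Variable C : numClosedFieldType.
Implicit Types (f : nat -> C) (U : infmx C).

Lemma sum_ext f N M : (forall k, (N <= k)%N -> f k = 0) -> (N <= M)%N ->
  \sum_(k < M) f k = \sum_(k < N) f k.
Proof.
move=> H NM; rewrite -!(big_mkord xpredT) (big_cat_nat (leq0n N) NM) /=.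
rewrite [X in _ + X]big1_seq ?addr0 // => k /andP[_]; rewrite mem_index_iota.
by case/andP => + _; apply: H.
Qed.

Lemma fsum_eq f s M : has_fsum f s -> (forall k, (M <= k)%N -> f k = 0) ->
  s = \sum_(k < M) f k.
Proof.
move=> [N [HN ->]] HM.
by rewrite -(@sum_ext f N _ HN (leq_maxl N M)) -(@sum_ext f M _ HM (leq_maxr N M)).
Qed.

Lemma fsum_intro f M : (forall k, (M <= k)%N -> f k = 0) ->
  has_fsum f (\sum_(k < M) f k).
Proof. by move=> H; exists M. Qed.

Lemma col_bound U : (forall j, fin_supp (fun i => U i j)) ->
  forall n, exists K, forall j k, (j < n)%N -> (K <= k)%N -> U k j = 0.
Proof.
move=> H; elim=> [|n [K IH]]; first by exists 0%N.
have [M HM] := H n; exists (maxn K M) => j k; rewrite ltnS leq_eqVlt.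
rewrite geq_max; case/orP => [/eqP -> /andP[_] /HM //| jn /andP[Kk _]].
exact: IH.
Qed.

Lemma key U i : row_col_finite U -> adjoint_mul_id U ->
  exists Ni K, (forall j, (Ni <= j)%N -> U i j = 0) /\
   (forall k, (K <= k)%N -> \sum_(j < Ni) (U i j)^* * U k j = 0) /\
   \sum_(k < K) (\sum_(j < Ni) (U i j)^* * U k j) *
        (\sum_(j < Ni) (U i j)^* * U k j)^*
   = \sum_(j < Ni) (U i j)^* * U i j.
Proof.
move=> [Hr Hc] Hadj.
have [Ni HNi] := Hr i; have [K HK] := @col_bound U Hc Ni.
exists Ni, K; split => //; split.
  by move=> k Kk; apply: big1 => j _; rewrite (HK j k) ?mulr0.
rewrite [LHS](eq_bigr (fun k : 'I_K => \sum_(j < Ni) \sum_(j0 < Ni) ((U i j)^* * U k j) * ((U i j0)^* * U k j0)^*)); last first.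
  by move=> k _; rewrite rmorph_sum mulr_suml; apply: eq_bigr => j _; rewrite mulr_sumr.

rewrite exchange_big /=.
apply: eq_bigr => j _; rewrite exchange_big /=.
have E : forall j' : 'I_Ni, \sum_(k < K) (U i j)^* * U k j *
     ((U i j')^* * U k j')^* =
   (U i j)^* * U i j' * (if (nat_of_ord j' == nat_of_ord j) then 1 else 0).
  move=> j'; have := @fsum_eq _ _ K (Hadj j' j).
  move=> ->; last by move=> k Kk; rewrite (HK j k) ?mulr0.
  rewrite mulr_sumr; apply: eq_bigr => k _.
  by rewrite rmorphM /= conjCK; ring.
under eq_bigr => j' _ do rewrite E.
rewrite (bigD1 j) //= eqxx mulr1 big1 ?addr0 // => j' /negbTE.
by rewrite -val_eqE /= => ->; rewrite mulr0.
Qed.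

Lemma x01 (x : C) : x = x * x^* -> x = 0 \/ x = 1.
Proof.
have [->|nz] := eqVneq x 0; first by left.
move=> H; right; have : x * 1 = x * x^* by rewrite mulr1 -H.
by move/(mulfI nz) => h; rewrite -[x]conjCK -h conjC1.
Qed.

Lemma gk_conj U i k Ni : (forall j, (Ni <= j)%N -> U i j = 0) ->
  row_inner_is U k i ((\sum_(j < Ni) (U i j)^* * U k j)^*).
Proof.
move=> HN; rewrite rmorph_sum /=.
have -> : \sum_(j < Ni) ((U i j)^* * U k j)^* = \sum_(j < Ni) (U k j)^* * U i j.
  by apply: eq_bigr => j _; rewrite rmorphM /= conjCK mulrC.
by apply: fsum_intro => j /HN ->; rewrite mulr0.
Qed.

Lemma nn (x : C) : 0 <= x * x^*.
Proof. by rewrite -normCK exprn_ge0. Qed.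

Lemma nn0 (x : C) : x * x^* = 0 -> x = 0.
Proof. by rewrite -normCK => /eqP; rewrite sqrf_eq0 normr_eq0 => /eqP. Qed.

Lemma main_gen U : row_col_finite U -> adjoint_mul_id U ->
  (rows_orthogonal U <-> rows_norm01 U).
Proof.
move=> Hf Hadj; split.
- move=> Horth i.
  have [Ni [K [HN [HK Hs]]]] := @key U i Hf Hadj.
  set g := fun k => \sum_(j < Ni) (U i j)^* * U k j.
  have Hg : forall k, row_inner_is U i k (g k).
    by move=> k; apply: fsum_intro => j /HN ->; rewrite conjC0 mul0r.
  have g0 : forall k, k <> i -> g k = 0.
    move=> k ki; have := Horth k i ki.
    by move/fsum_eq => /(_ Ni) -> // j /HN ->; rewrite conjC0 mul0r.
  suff : g i = 0 \/ g i = 1 by case=> E; [left|right]; rewrite -E; apply: Hg.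
  have [iK|Ki] := ltnP i K; last by left; apply: HK.
  apply: x01; rewrite -[g i in LHS]Hs (bigD1 (Ordinal iK)) //=.
  rewrite [X in _ + X]big1 ?addr0 //.
  move=> k; rewrite -val_eqE /= => /eqP ki.
  by rewrite /g; move: (g0 k ki); rewrite /g => ->; rewrite mul0r.
- move=> Hn i k ik.
  have [Ni [K [HN [HK Hs]]]] := @key U i Hf Hadj.
  set g := fun k => \sum_(j < Ni) (U i j)^* * U k j.
  suff gk : g k = 0.
    by have := @gk_conj U i k Ni HN; rewrite -/(g k) gk conjC0.
  have [Kk|kK] := leqP K k; first by apply: HK.
  have gi : g i * (g i)^* = g i.
    have Hi : forall s, row_inner_is U i i s -> s = g i.
      move=> s Hs'; rewrite (@fsum_eq _ _ Ni Hs') // => j /HN ->.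
      by rewrite conjC0 mul0r.
    by case: (Hn i) => /Hi <-; rewrite ?conjC0 ?conjC1 ?mulr0 ?mulr1.
  have [iK|Ki] := ltnP i K.
    move: Hs; rewrite (bigD1 (Ordinal iK)) //= => Hs.
    have H : \sum_(k0 < K | k0 != Ordinal iK) g k0 * (g k0)^* = 0.
      apply: (addrI (g i)); rewrite addr0 -[X in X + _ = _]gi; exact: Hs.
    apply: nn0; apply: (psumr_eq0P _ H (i := Ordinal kK)).
      by move=> *; apply: nn.
    by rewrite -val_eqE /=; apply/eqP => E; apply: ik.
  have gi0 : g i = 0 by apply: HK.
  have H : \sum_(k0 < K) g k0 * (g k0)^* = 0 := etrans Hs gi0.
  apply: nn0; apply: (psumr_eq0P _ H (i := Ordinal kK)) => // *; apply: nn.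
Qed.
End G.
Local Open Scope complex_scope.

Theorem lemma3 (R : realType) (U : infmx R[i]) :
  row_col_finite U -> adjoint_mul_id U ->
  (rows_orthogonal U <-> rows_norm01 U).
Proof.
exact: main_gen.
Qed.
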